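(* Let $n\ge 2$, let $\mathcal{B}$ be a maximal commutative subalgebra of $\mathcal{M}_{d\times d}(\mathbb{C})$, and let $\mathcal{A}$ be a maximal subalgebra of $\mathcal{T}_{n,d}(\mathcal{B})$ (i.e. an algebra contained in $\mathcal{T}_{n,d}(\mathcal{B})$ not properly contained in any other algebra contained in $\mathcal{T}_{n,d}(\mathcal{B})$). Suppose $\mathcal{A}$ contains an element $\mathbf{T}=(T_{p-q})_{p,q=0}^{n-1}$ such that $T_p$ is invertible for some $p\neq 0$. Then $\mathcal{A}=\mathcal{F}_{A,B}^{\mathcal{B}}$ for some $A,B\in\mathcal{B}$.
   Context: For positive integers $n,d$, $\mathcal{T}_{n,d}$ denotes the set of block Toeplitz matrices $\mathbf{T}=(T_{p-q})_{p,q=0}^{n-1}$: $nd\times nd$ complex matrices partitioned into $n\times n$ blocks of size $d\times d$, whose $(p,q)$ block is $T_{p-q}$ for some $T_{-(n-1)},\dots,T_{n-1}\in\mathcal{M}_{d\times d}(\mathbb{C})$. For a subalgebra $\mathcal{B}\subseteq\mathcal{M}_{d\times d}(\mathbb{C})$, $\mathcal{T}_{n,d}(\mathcal{B})$ is the set of $\mathbf{T}\in\mathcal{T}_{n,d}$ with all $T_j\in\mathcal{B}$. An algebra contained in a set of matrices is a subset that is a linear subspace closed under matrix multiplication. For $A,B\in\mathcal{M}_{d\times d}(\mathbb{C})$, $$\mathcal{F}_{A,B}^{\mathcal{B}}=\{(T_{p-q})_{p,q=0}^{n-1}\in\mathcal{T}_{n,d}(\mathcal{B}) : AT_j=BT_{j-n}\text{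 for } j=1,2,\dots,n-1\}.$$ A maximal commutative subalgebra of $\mathcal{M}_{d\times d}(\mathbb{C})$ is a commutative subalgebra not properly contained in any commutative subalgebra. *)

(* Defs.v *)
From HB Require Import structures.
From mathcomp Require Import all_boot all_order all_algebra.
Set Implicit Arguments. Unset Strict Implicit. Unset Printing Implicit Defensive.
Import Order.TTheory GRing.Theory Num.Theory.
Local Open Scope ring_scope.

(* The base field: an arbitrary numeric algebraically closed field
   (char 0, algebraically closed); C (complex numbers) is such a field. *)

Section Defs.
Variable C : numClosedFieldType.

Definition is_mx_algebra (k : nat) (S : 'M[C]_k -> Prop) : Prop :=
  [/\ S 0,
      (forall (a : C) x y, S x -> S y -> S (a *: x + y))
    & (forall x y, S x -> S y -> S (x *m y))].

Definition algebra_in (k : nat) (S X : 'M[C]_k -> Prop) : Prop :=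
  is_mx_algebra S /\ (forall x, S x -> X x).

Definition maximal_algebra_in (k : nat) (S X : 'M[C]_k -> Prop) : Prop :=
  algebra_in S X /\
  (forall S', algebra_in S' X -> (forall x, S x -> S' x) -> forall x, S' x -> S x).

Definition commutative_set (k : nat) (S : 'M[C]_k -> Prop) : Prop :=
  forall x y, S x -> S y -> x *m y = y *m x.

Definition maximal_commutative_subalgebra (d : nat) (B : 'M[C]_d -> Prop) : Prop :=
  [/\ is_mx_algebra B, commutative_set B &
      forall B', is_mx_algebra B' -> commutative_set B' ->
        (forall x, B x -> B' x) -> forall x, B' x -> B x].

(* M : nd x nd is the block Toeplitz matrix with blocks (Tf (p - q))_{p,q};
   the (p,q) block occupies rows p*d + a and columns q*d + b (a, b < d). *)
Definition block_toeplitz_of (n d : nat) (Tf : int -> 'M[C]_d) (M : 'M[C]_(n * d)) : Prop :=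
  forall (p q : 'I_n) (a b : 'I_d),
    M (mxvec_index p a) (mxvec_index q b) = Tf (p%:Z - q%:Z) a b.

Definition Toeplitz_B (n d : nat) (B : 'M[C]_d -> Prop) (M : 'M[C]_(n * d)) : Prop :=
  exists Tf : int -> 'M[C]_d, block_toeplitz_of Tf M /\
    (forall j : int, (absz j < n)%N -> B (Tf j)).

Definition F_set (n d : nat) (B : 'M[C]_d -> Prop) (A B0 : 'M[C]_d)
    (M : 'M[C]_(n * d)) : Prop :=
  exists Tf : int -> 'M[C]_d, block_toeplitz_of Tf M /\
    (forall j : int, (absz j < n)%N -> B (Tf j)) /\
    (forall j : nat, (1 <= j <= n.-1)%N ->
       A *m Tf j%:Z = B0 *m Tf (j%:Z - n%:Z)).

End Defs.

(* Main.v *)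
Require Import Defs.
From HB Require Import structures.
From mathcomp Require Import all_boot all_order all_algebra.
From mathcomp Require Import zify ring lra.
Set Implicit Arguments. Unset Strict Implicit. Unset Printing Implicit Defensive.
Import Order.TTheory GRing.Theory Num.Theory.
Local Open Scope ring_scope.

Section Blk.
Variable C : numClosedFieldType.
Variables n d : nat.

Definition blk (M : 'M[C]_(n * d)) (p q : 'I_n) : 'M[C]_d :=
  \matrix_(a, b) M (mxvec_index p a) (mxvec_index q b).

Definition prj (k : 'I_(n * d)) : 'I_n * 'I_d :=
  enum_val (cast_ord (esym (mxvec_cast n d)) k).

Definition mkblk (f : 'I_n -> 'I_n -> 'M[C]_d) : 'M[C]_(n * d) :=
  \matrix_(i, j) f (prj i).1 (prj j).1 (prj i).2 (prj j).2.

Lemma prj_idx p a : prj (mxvec_index p a) = (p, a).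
Proof. by rewrite /prj /mxvec_index cast_ordK enum_rankK. Qed.

Lemma blkK f p q : blk (mkblk f) p q = f p q.
Proof. by apply/matrixP => a b; rewrite !mxE !prj_idx. Qed.

Lemma blk_inj M N : (forall p q, blk M p q = blk N p q) -> M = N.
Proof.
move=> h; apply/matrixP => i j.
case/mxvec_indexP: i => p a; case/mxvec_indexP: j => q b.
by have /matrixP/(_ a b) := h p q; rewrite !mxE.
Qed.

Lemma blk_mul M N p q : blk (M *m N) p q = \sum_r blk M p r *m blk N r q.
Proof.
apply/matrixP => a b; rewrite !mxE summxE.
rewrite (reindex (uncurry (@mxvec_index n d))) /=; last first.
  by case: (curry_mxvec_bij n d) => g h1 h2; exists g => x _; [apply: h1|apply: h2].
rewrite [RHS](eq_bigr (fun r => \sum_c blk M p r a c * blk N r q c b)); last first.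
  by move=> r _; rewrite mxE.
rewrite pair_big /=; apply: eq_bigr => -[r c] _ /=; by rewrite !mxE.
Qed.

Lemma blkD (a : C) M N p q : blk (a *: M + N) p q = a *: blk M p q + blk N p q.
Proof. by apply/matrixP => x y; rewrite !mxE. Qed.

Lemma blk0 p q : blk 0 p q = 0.
Proof. by apply/matrixP => x y; rewrite !mxE. Qed.

Lemma toepP Tf M : block_toeplitz_of Tf M <-> forall p q, blk M p q = Tf (p%:Z - q%:Z).
Proof.
split=> h p q; first by apply/matrixP => a b; rewrite mxE h.
by move=> a b; have /matrixP/(_ a b) := h p q; rewrite mxE.
Qed.

End Blk.

Section Main.
Variable C : numClosedFieldType.
Variables n' d : nat.
Local Notation n := n'.+2.
Variable B : 'M[C]_d -> Prop.
Hypothesis Balg : is_mx_algebra B.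
Hypothesis Bcomm : commutative_set B.

Local Notation blk := (@blk C n d).
Local Notation mkblk := (@mkblk C n d).

Lemma B0 : B 0. Proof. by case: Balg. Qed.
Lemma BD x y : B x -> B y -> B (x + y).
Proof. by case: Balg => _ h _ hx hy; have := h 1 x y hx hy; rewrite scale1r. Qed.
Lemma BZ (a : C) x : B x -> B (a *: x).
Proof. by case: Balg => h0 h _ bx; have := h a x 0 bx h0; rewrite addr0. Qed.
Lemma BM x y : B x -> B y -> B (x *m y).
Proof. by move=> hx hy; case: Balg => _ _ h; apply: h. Qed.
Lemma Bsum (I : finType) (F : I -> 'M_d) : (forall i, B (F i)) -> B (\sum_i F i).
Proof. by move=> h; apply: (big_ind B B0 BD) => i _; apply: h. Qed.

Definition blocksB (M : 'M[C]_(n * d)) := forall p q, B (blk M p q).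

Lemma blocksB_alg : is_mx_algebra blocksB.
Proof.
split.
- by move=> p q; rewrite blk0; exact: B0.
- by move=> a x y hx hy p q; rewrite blkD; apply: BD; [apply: BZ|].
- by move=> x y hx hy p q; rewrite blk_mul; apply: Bsum => r; apply: BM.
Qed.

Definition Zf (X Y : 'M[C]_d) (p r : 'I_n) : 'M[C]_d :=
  if nat_of_ord p == (nat_of_ord r).+1 then X
  else if (nat_of_ord p == 0%N) && (nat_of_ord r == n'.+1) then Y else 0.

Definition Zm X Y := mkblk (Zf X Y).

Lemma ZM_blk X Y M p q : blk (Zm X Y *m M) p q =
  if nat_of_ord p == 0%N then Y *m blk M ord_max q else X *m blk M (inord p.-1) q.
Proof.
rewrite blk_mul.
case: ifP => p0.
  rewrite (bigD1 ord_max) //= big1 ?addr0; first by rewrite blkK /Zf (eqP p0) /= eqxx.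
  move=> r /eqP rm; rewrite blkK /Zf (eqP p0) /=.
  have -> : (nat_of_ord r == n'.+1) = false.
    by apply/negbTE/eqP => h; apply: rm; apply: val_inj.
  by rewrite mul0mx.
have pn : (p.-1 < n)%N by have := ltn_ord p; lia.
rewrite (bigD1 (inord p.-1)) //= big1 ?addr0.
  rewrite blkK /Zf inordK // p0 /=.
  by rewrite prednK ?eqxx // lt0n p0.
move=> r /eqP rm; rewrite blkK /Zf p0 /=.
have -> : (nat_of_ord p == (nat_of_ord r).+1) = false.
  apply/negbTE/eqP => h; apply: rm; apply: val_inj; rewrite /= inordK //= h //.
by rewrite mul0mx.
Qed.

Lemma MZ_blk X Y M p q : blk (M *m Zm X Y) p q =
  if nat_of_ord q == n'.+1 then blk M p ord0 *m Y else blk M p (inord q.+1) *m X.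
Proof.
rewrite blk_mul.
case: ifP => qn.
  rewrite (bigD1 ord0) //= big1 ?addr0; first by rewrite blkK /Zf qn /=.
  move=> r /eqP rm; rewrite blkK /Zf.
  have -> : (nat_of_ord r == (nat_of_ord q).+1) = false.
    by apply/negbTE/eqP => h; have := ltn_ord r; rewrite h (eqP qn); lia.
  have -> : (nat_of_ord r == 0%N) = false.
    by apply/negbTE/eqP => h; apply: rm; apply: val_inj.
  by rewrite mulmx0.
have qn' : (q.+1 < n)%N by have := ltn_ord q; move/negbT: qn; lia.
rewrite (bigD1 (inord q.+1)) //= big1 ?addr0.
  by rewrite blkK /Zf inordK // eqxx.
move=> r /eqP rm; rewrite blkK /Zf qn andbF.
have -> : (nat_of_ord r == (nat_of_ord q).+1) = false.
  apply/negbTE/eqP => h; apply: rm; apply: val_inj; rewrite /= inordK //= h //.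
by rewrite mulmx0.
Qed.


Definition Fcond (X Y : 'M[C]_d) (f : int -> 'M[C]_d) :=
  forall j : nat, (1 <= j <= n'.+1)%N -> Y *m f j%:Z = X *m f (j%:Z - n%:Z).

Lemma key_back X Y M f : B X -> B Y ->
  (forall p q, blk M p q = f (p%:Z - q%:Z)) -> blocksB M -> Fcond X Y f ->
  M *m Zm X Y = Zm X Y *m M.
Proof.
move=> bX bY hT hB hF; apply: blk_inj => p q; rewrite ZM_blk MZ_blk.
have pn := ltn_ord p; have qn := ltn_ord q.
case: ifP => q1; case: ifP => p0.
- rewrite (Bcomm (hB _ _) bY) !hT; congr (Y *m f _) => /=; lia.
- rewrite (Bcomm (hB _ _) bY) !hT inordK; last lia.
  have e1 : (p%:Z - (nat_of_ord (@ord0 n'.+1))%:Z) = p%:Z by rewrite /=; lia.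
  have e2 : (p.-1%:Z - q%:Z) = p%:Z - n%:Z by rewrite /=; lia.
  by rewrite e1 e2; apply: hF; lia.
- rewrite (Bcomm (hB _ _) bX) !hT inordK; last lia.
  have e1 : ((nat_of_ord (@ord_max n'.+1))%:Z - q%:Z) = (n'.+1 - q)%N%:Z by rewrite /=; lia.
  have e2 : p%:Z - q.+1%:Z = (n'.+1 - q)%N%:Z - n%:Z by rewrite /=; lia.
  by rewrite e1 e2; symmetry; apply: hF; lia.
- rewrite (Bcomm (hB _ _) bX) !hT !inordK; try lia.
  congr (X *m f _); lia.
Qed.


Lemma key_fwd X Y M : B X -> B Y -> X \in unitmx -> blocksB M ->
  M *m Zm X Y = Zm X Y *m M ->
  exists f, (forall p q, blk M p q = f (p%:Z - q%:Z)) /\ Fcond X Y f.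
Proof.
move=> bX bY uX hB hC.
pose N (p q : nat) := blk M (inord p) (inord q).
have hCb P Q := congr1 (fun K => blk K P Q) hC.
have stepa : forall p q : nat, (p < n'.+1)%N -> (q < n'.+1)%N -> N p q = N p.+1 q.+1.
  move=> p q hp hq.
  have := hCb (inord p.+1) (inord q); rewrite ZM_blk MZ_blk !inordK; try lia.
  have -> : (q == n'.+1) = false by apply/negbTE/eqP; lia.
  rewrite /= (Bcomm (hB _ _) bX) => h.
  by apply: (can_inj (mulKmx uX)); rewrite /N h.
have stepb : forall k p q : nat, (p + k < n)%N -> (q + k < n)%N ->
    N (p + k)%N (q + k)%N = N p q.
  elim=> [|k IH] p q hp hq; first by rewrite !addn0.
  rewrite !addnS -stepa; try lia.
  by apply: IH; lia.
pose f (j : int) := if (0 <= j) then N `|j|%N 0%N else N 0%N `|j|%N.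
have hT : forall p q : 'I_n, blk M p q = f (p%:Z - q%:Z).
  move=> p q; have pn := ltn_ord p; have qn := ltn_ord q.
  have -> : blk M p q = N p q by rewrite /N !inord_val.
  rewrite /f; case: ifP => h.
    have -> : `|(p%:Z - q%:Z)|%N = (p - q)%N by lia.
    have := stepb q (p - q)%N 0%N; rewrite add0n subnK; last lia.
    by move=> -> //; lia.
  have -> : `|(p%:Z - q%:Z)|%N = (q - p)%N by lia.
  have := stepb p 0%N (q - p)%N; rewrite add0n subnK; last lia.
  by move=> -> //; lia.
exists f; split => // j hj.
have := hCb ord0 (inord (n'.+1 - j)); rewrite ZM_blk MZ_blk !inordK; try lia.
have -> : (n'.+1 - j == n'.+1)%N = false by apply/negbTE/eqP; lia.
rewrite /= (Bcomm (hB _ _) bX).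
have e1 : blk M ord_max (inord (n'.+1 - j)) = f j%:Z.
  rewrite hT /f inordK; last lia.
  have -> : (0 <= (nat_of_ord (@ord_max n'.+1))%:Z - (n'.+1 - j)%N%:Z) = true by rewrite /=; lia.
  have -> : `|(nat_of_ord (@ord_max n'.+1))%:Z - (n'.+1 - j)%N%:Z|%N = j by rewrite /=; lia.
  by [].
have e2 : blk M ord0 (inord (n'.+1 - j).+1) = f (j%:Z - n%:Z).
  rewrite /f.
  have -> : (0 <= j%:Z - n%:Z) = false by lia.
  have -> : `|j%:Z - n%:Z|%N = (n'.+1 - j).+1 by lia.
  by rewrite /N; congr (blk M _ _); apply: val_inj; rewrite /= inordK.
by rewrite e1 e2.
Qed.


Definition BT (M : 'M[C]_(n * d)) := mkblk (fun p q => blk M q p).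

Lemma BT_blk M p q : blk (BT M) p q = blk M q p.
Proof. by rewrite blkK. Qed.

Lemma BT_blocks M : blocksB M -> blocksB (BT M).
Proof. by move=> h p q; rewrite BT_blk. Qed.

Lemma BT0 : BT 0 = 0.
Proof. by apply: blk_inj => p q; rewrite BT_blk !blk0. Qed.

Lemma BT_lin (a : C) M N : BT (a *: M + N) = a *: BT M + BT N.
Proof. by apply: blk_inj => p q; rewrite BT_blk !blkD !BT_blk. Qed.

Lemma BT_mul M N : blocksB M -> blocksB N -> BT (M *m N) = BT N *m BT M.
Proof.
move=> hM hN; apply: blk_inj => p q; rewrite BT_blk !blk_mul.
by apply: eq_bigr => r _; rewrite !BT_blk Bcomm.
Qed.

Lemma Fcond_neg X Y f : Fcond X Y f -> Fcond Y X (fun j => f (- j)).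
Proof.
move=> h j hj; have := h (n - j)%N; rewrite /=.
have e1 : - j%:Z = (n - j)%N%:Z - n%:Z by lia.
have e2 : - (j%:Z - n%:Z) = (n - j)%N%:Z by lia.
by rewrite e1 e2 => -> //; lia.
Qed.

Lemma toep_blocks M f : (forall p q, blk M p q = f (p%:Z - q%:Z)) ->
  (forall j : int, (absz j < n)%N -> B (f j)) -> blocksB M.
Proof.
move=> hT hB p q; rewrite hT; apply: hB.
have := ltn_ord p; have := ltn_ord q; lia.
Qed.

Lemma toep_Bf M f : (forall p q, blk M p q = f (p%:Z - q%:Z)) -> blocksB M ->
  forall j : int, (absz j < n)%N -> B (f j).
Proof.
move=> hT hB j hj; case: (boolP (0 <= j)) => h.
  have := hB (inord `|j|%N) ord0; rewrite hT inordK //=.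
  by have -> : (`|j|%N%:Z - 0%:Z) = j by lia.
have := hB ord0 (inord `|j|%N); rewrite hT inordK //=.
by have -> : (0%:Z - `|j|%N%:Z) = j by lia.
Qed.

Definition Gpos X Y M := blocksB M /\ M *m Zm X Y = Zm X Y *m M.
Definition Gneg X Y M := blocksB M /\ BT M *m Zm X Y = Zm X Y *m BT M.

Lemma Gpos_alg X Y : is_mx_algebra (Gpos X Y).
Proof.
case: blocksB_alg => h0 h1 h2; split.
- by split=> //; rewrite mul0mx mulmx0.
- move=> a x y [hx cx] [hy cy]; split; first exact: h1.
  by rewrite mulmxDl mulmxDr -scalemxAl -scalemxAr cx cy.
- move=> x y [hx cx] [hy cy]; split; first exact: h2.
  by rewrite -mulmxA cy !mulmxA cx.
Qed.

Lemma Gneg_alg X Y : is_mx_algebra (Gneg X Y).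
Proof.
case: blocksB_alg => h0 h1 h2; split.
- by split=> //; rewrite BT0 mul0mx mulmx0.
- move=> a x y [hx cx] [hy cy]; split; first exact: h1.
  by rewrite BT_lin mulmxDl mulmxDr -scalemxAl -scalemxAr cx cy.
- move=> x y [hx cx] [hy cy]; split; first exact: h2.
  by rewrite BT_mul // -mulmxA cx !mulmxA cy.
Qed.

Lemma Gpos_F X Y M : B X -> B Y -> X \in unitmx ->
  Gpos X Y M <-> @F_set C n d B Y X M.
Proof.
move=> bX bY uX; split.
  move=> [hB hC]; have [f [hT hF]] := key_fwd bX bY uX hB hC.
  exists f; split; first by apply/toepP.
  by split; [apply: toep_Bf hT hB|apply: hF].
move=> [f [/toepP hT [hB hF]]].
have hb := toep_blocks hT hB; split => //.
exact: key_back bX bY hT hb hF.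
Qed.

Lemma Gneg_F X Y M : B X -> B Y -> X \in unitmx ->
  Gneg X Y M <-> @F_set C n d B X Y M.
Proof.
move=> bX bY uX; split.
  move=> [hB hC]; have [f [hT hF]] := key_fwd bX bY uX (BT_blocks hB) hC.
  have hT' : forall p q, blk M p q = f (- (p%:Z - q%:Z)).
    by move=> p q; rewrite -BT_blk hT opprB.
  exists (fun j => f (- j)); split; first by apply/toepP.
  by split; [apply: toep_Bf hT' hB|apply: (Fcond_neg hF)].
move=> [f [/toepP hT [hB hF]]].
have hb := toep_blocks hT hB; split => //.
have hT' : forall p q, blk (BT M) p q = f (- (p%:Z - q%:Z)).
  by move=> p q; rewrite BT_blk hT opprB.
apply: key_back bX bY hT' (BT_blocks hb) _.
exact: (Fcond_neg hF).
Qed.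


Lemma prodcond M0 S Tf Sf w :
  (forall p q, blk M0 p q = Tf (p%:Z - q%:Z)) ->
  (forall p q, blk S p q = Sf (p%:Z - q%:Z)) ->
  (forall p q, blk (M0 *m S) p q = w (p%:Z - q%:Z)) ->
  forall i j : nat, (1 <= i <= n'.+1)%N -> (1 <= j <= n'.+1)%N ->
  Tf i%:Z *m Sf (j%:Z - n%:Z) = Tf (i%:Z - n%:Z) *m Sf j%:Z.
Proof.
move=> hT hS hW i j hi hj.
pose G (r : nat) := Tf (i%:Z - r.+1%:Z) *m Sf (r.+1%:Z - (n - j)%N%:Z).
have L : blk (M0 *m S) (inord i) (inord (n - j)) =
    Tf i%:Z *m Sf (j%:Z - n%:Z) + \sum_(r < n'.+1) G r.
  rewrite blk_mul big_ord_recl; congr (_ + _).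
    rewrite hT hS !inordK /=; try lia.
    by congr (Tf _ *m Sf _); lia.
  apply: eq_bigr => r _; rewrite hT hS !inordK /=; try lia.
  by rewrite /G; congr (Tf _ *m Sf _); lia.
have R : blk (M0 *m S) (inord i.-1) (inord (n'.+1 - j)) =
    \sum_(r < n'.+1) G r + Tf (i%:Z - n%:Z) *m Sf j%:Z.
  rewrite blk_mul big_ord_recr; congr (_ + _).
    apply: eq_bigr => r _; rewrite hT hS !inordK /=; try lia.
    by rewrite /G; congr (Tf _ *m Sf _); lia.
  rewrite hT hS !inordK /=; try lia.
  by congr (Tf _ *m Sf _); lia.
have E : blk (M0 *m S) (inord i) (inord (n - j)) =
    blk (M0 *m S) (inord i.-1) (inord (n'.+1 - j)).
  rewrite !hW !inordK; try lia.
  by congr (w _); lia.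
by move: E; rewrite L R addrC => /addrI.
Qed.

End Main.

Unset Implicit Arguments.
Lemma finish (C : numClosedFieldType) k (X F G Alg : 'M[C]_k -> Prop) :
  maximal_algebra_in Alg X -> is_mx_algebra G -> (forall M, G M <-> F M) ->
  (forall M, F M -> X M) -> (forall M, Alg M -> F M) ->
  forall M, Alg M <-> F M.
Proof.
move=> [_ Amax] hG hGF hFX hAF M; split; first exact: hAF.
move=> /hGF hM; apply: (Amax G) => //.
  by split => // x /hGF; apply: hFX.
by move=> x /hAF /hGF.
Qed.

Theorem corollary4p6 (C : numClosedFieldType) (n d : nat)
  (hn : (2 <= n)%N) (hd : (0 < d)%N)
  (B : 'M[C]_d -> Prop) (Alg : 'M[C]_(n * d) -> Prop) :
  maximal_commutative_subalgebra B ->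
  maximal_algebra_in Alg (@Toeplitz_B C n d B) ->
  (exists (M : 'M[C]_(n * d)) (Tf : int -> 'M[C]_d) (p : int),
      [/\ Alg M, block_toeplitz_of Tf M, p != 0, (absz p < n)%N
        & Tf p \in unitmx]) ->
  exists A B0 : 'M[C]_d, [/\ B A, B B0 &
    forall M, Alg M <-> @F_set C n d B A B0 M].
Proof.
destruct n as [|[|n']]; try by [].
move=> [Balg Bcomm _] hmax [M0 [Tf0 [p [hA0 /toepP hT0 p0 pn u0]]]].
have hmax' := hmax; case: hmax' => [[Aalg Asub] _].
have blocksT : forall M : 'M[C]_(n'.+2 * d), Toeplitz_B B M -> blocksB B M.
  by move=> M [f [hT hB]]; apply: (toep_blocks (f:=f)) hB; apply/toepP.
have hb0 := blocksT _ (Asub _ hA0).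
pose i0 : nat := if (0 < p) then `|p|%N else (n'.+2 - `|p|)%N.
have hi0 : (1 <= i0 <= n'.+1)%N by rewrite /i0; case: ifP => h; lia.
pose A := Tf0 (i0%:Z - n'.+2%:Z); pose B0 := Tf0 i0%:Z.
have bA : B A by apply: (toep_Bf hT0 hb0); lia.
have bB0 : B B0 by apply: (toep_Bf hT0 hb0); lia.
have hFX : forall M : 'M[C]_(n'.+2 * d), F_set B A B0 M -> Toeplitz_B B M.
  by move=> M [f [hT [hB _]]]; exists f.
have hAF : forall M : 'M[C]_(n'.+2 * d), Alg M -> F_set B A B0 M.
  move=> S hS; have [Sf [hTS hBS]] := Asub _ hS.
  case: Aalg => _ _ Amul.
  have [w [hW _]] := Asub _ (Amul _ _ hA0 hS).
  exists Sf; split => //; split => // j hj.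
  have := prodcond hT0 (iffLR (toepP _ _) hTS) (iffLR (toepP _ _) hW) hi0 hj.
  by rewrite /A /B0 => ->.
case: (boolP (0 < p)) => pp.
  have uB0 : B0 \in unitmx.
    by rewrite /B0 /i0 pp; have -> : `|p|%N%:Z = p by lia.
  exists A, B0; split => //.
  apply: (@finish C _ _ (F_set B A B0) _ _ hmax (Gpos_alg n' Balg B0 A)) => // M.
  exact: Gpos_F.
have uA : A \in unitmx.
  rewrite /A /i0 (negbTE pp).
  by have -> : (n'.+2 - `|p|)%N%:Z - n'.+2%:Z = p by lia.
exists A, B0; split => //.
apply: (@finish C _ _ (F_set B A B0) _ _ hmax (Gneg_alg n' Balg Bcomm A B0)) => // M.
exact: Gneg_F.
Qed.
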